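(* Let $m\geq1$ and let $\Delta$ be the triangle with vertices $(-\alpha,0)$, $(m-1+\beta,0)$, $(m,m+1)$, where $\alpha,\beta$ are rational with $0<\alpha<\frac{1}{1+(m+1)+(m+1)^2}$ and $\frac{1}{m+2}<\beta<1-\frac{1}{1+\frac{1}{m+1}+\frac{1}{(m+1)^2}-\frac{\alpha}{1-(m+2)\alpha}}$. Let $X=\mathrm{Bl}_{t_0}X_\Delta$, let $C\subset X$ be the strict transform of $\{\xi_m=0\}$, and let $D$ be the class $\pi^*H'-(m+1)E$, where $H'$ is the class on $X_\Delta$ corresponding to the triangle with sides parallel to those of $\Delta$ whose base is the interval $[0,m]$ on the $x$-axis. Then $C$ is a negative curve with $C\cdot C<0$, and $C\cdot D=0$.
   Context: Let $k$ be an algebraically closed field of characteristic zero, $T=\operatorname{Spec}k[x^{\pm1},y^{\pm1}]$, $t_0=(1,1)$. For a rational triangle $\Delta$, $X_\Delta$ is the projective toric surface defined by $\Delta$, $\pi:X=\mathrm{Bl}_{t_0}X_\Delta\to X_\Delta$ the blowup with exceptional curve $E$. Divisor classes on $X_\Delta$ correspond to rational triangles with sides parallel to those of $\Delta$ (each side's line containing a lattice point), up to integral translation; the self-intersection of the class of a triangle is twice its area, and $E\cdot E=-1$. $\xi_m\in k[x,y]$ is the irreducible polynomial (unique up to a constant) vanishing to order exactly $m$ at $t_0$ with Newton polygon the triangle with vertices $(0,0)$, $(m-1,0)$, $(m,m+1)$; explicitly $\xi_m=(-1)^mx^my^{m+1}+\sum_{j=0}^{m-1}\sum_{i=j}^{m-1}(-1)^j\binom{m+1}{j}x^iy^j$.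 A negative curve is an irreducible curve with nonpositive self-intersection. *)

(* Defs.v *)
(* Combinatorial model of the intersection theory on
   X = Bl_{t0} X_Delta, following the dictionary stated in the paper:
   divisor classes on X_Delta  <->  rational triangles with sides parallel to
   those of Delta (up to translation), self-intersection = 2 * area,
   E.E = -1, pi^* D . E = 0. *)
From HB Require Import structures.
From mathcomp Require Import all_boot all_order all_algebra.
Set Implicit Arguments.
Unset Strict Implicit.
Unset Printing Implicit Defensive.
Import Order.TTheory GRing.Theory Num.Theory.
Local Open Scope ring_scope.

(* Delta = triangle with vertices (-al,0), (m-1+be,0), (m,m+1).
   Its three sides lie on level lines of the linear forms
     l0 u = u.y                      (bottom side,  Delta: l0 >= 0)
     l1 u = (m+1) u.x - (m+al) u.y   (left side,    Delta: l1 >= -(m+1) al)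
     l2 u = (m+1) u.x - (1-be) u.y   (right side,   Delta: l2 <= (m+1)(m-1+be)). *)
Definition l0 (u : rat * rat) : rat := u.2.
Definition l1 (m : nat) (al : rat) (u : rat * rat) : rat :=
  m.+1%:R * u.1 - (m%:R + al) * u.2.
Definition l2 (m : nat) (be : rat) (u : rat * rat) : rat :=
  m.+1%:R * u.1 - (1 - be) * u.2.

(* A triangle with sides parallel to those of Delta is given by its three
   support numbers (a0, a1, b2):  { u | l0 u >= a0, l1 u >= a1, l2 u <= b2 }. *)
Definition tri := (rat * rat * rat)%type.

Definition tri_add (T1 T2 : tri) : tri :=
  (T1.1.1 + T2.1.1, T1.1.2 + T2.1.2, T1.2 + T2.2).

Definition tri_vertices (m : nat) (al be : rat) (T : tri) :
    (rat * rat) * (rat * rat) * (rat * rat) :=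
  let a0 := T.1.1 in let a1 := T.1.2 in let b2 := T.2 in
  let y3 := (b2 - a1) / (m%:R - 1 + al + be) in
  (((a1 + (m%:R + al) * a0) / m.+1%:R, a0),
   ((b2 + (1 - be) * a0) / m.+1%:R, a0),
   ((a1 + (m%:R + al) * y3) / m.+1%:R, y3)).

Definition tri_area (m : nat) (al be : rat) (T : tri) : rat :=
  let V := tri_vertices m al be T in
  let P1 := V.1.1 in let P2 := V.1.2 in let P3 := V.2 in
  ((P2.1 - P1.1) * (P3.2 - P1.2) - (P3.1 - P1.1) * (P2.2 - P1.2)) / 2%:R.

(* intersection pairing on X_Delta: the symmetric bilinear form whose
   quadratic form is D.D = 2 * area (polarisation via Minkowski sum) *)
Definition tri_dot (m : nat) (al be : rat) (T1 T2 : tri) : rat :=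
  tri_area m al be (tri_add T1 T2) - tri_area m al be T1 - tri_area m al be T2.

(* classes on X = Bl_{t0} X_Delta of the form  pi^* T - e E *)
Definition bl_class := (tri * rat)%type.
Definition bl_dot (m : nat) (al be : rat) (D1 D2 : bl_class) : rat :=
  tri_dot m al be D1.1 D2.1 - D1.2 * D2.2.

(* Coefficients of xi_m = (-1)^m x^m y^(m+1)
      + sum_{j=0}^{m-1} sum_{i=j}^{m-1} (-1)^j binom(m+1,j) x^i y^j
   (integer coefficients; coefficient of x^i y^j). *)
Definition xi_coef (m : nat) (i j : nat) : int :=
  if (i == m) && (j == m.+1) then (-1) ^+ m
  else if (j <= i)%N && (i < m)%N then (-1) ^+ j * ('C(m.+1, j))%:Z
  else 0.

(* The class in X_Delta of the closure of {f = 0}: the triangle with sides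
   parallel to Delta cut out by the minima/maxima of l0, l1, l2 over the
   support (Newton polygon) of f. *)
Definition newton_tri (m : nat) (al be : rat) (c : nat -> nat -> int) (T : tri)
    : Prop :=
  let pt i j := (i%:R : rat, j%:R : rat) in
  (forall i j, c i j != 0 ->
     [/\ T.1.1 <= l0 (pt i j), T.1.2 <= l1 m al (pt i j) & l2 m be (pt i j) <= T.2])
  /\ (exists i j, c i j != 0 /\ l0 (pt i j) = T.1.1)
  /\ (exists i j, c i j != 0 /\ l1 m al (pt i j) = T.1.2)
  /\ (exists i j, c i j != 0 /\ l2 m be (pt i j) = T.2).

(* coefficient of (x-1)^a (y-1)^b in f = sum_{i,j<N} c i j x^i y^j *)
Definition taylor_t0 (c : nat -> nat -> int) (N a b : nat) : int :=
  \sum_(i < N) \sum_(j < N) c i j * ('C(i, a) * 'C(j, b))%:Z.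

Definition mult_t0 (c : nat -> nat -> int) (N mu : nat) : Prop :=
  (forall a b, (a + b < mu)%N -> taylor_t0 c N a b = 0)
  /\ (exists a b, (a + b)%N = mu /\ taylor_t0 c N a b != 0).

Definition H'tri (m : nat) : tri := (0, 0, m.+1%:R * m%:R).

(* Main.v *)
Require Import Defs.
From HB Require Import structures.
From mathcomp Require Import all_boot all_order all_algebra.
From mathcomp Require Import ring lra zify.
Set Implicit Arguments. Unset Strict Implicit. Unset Printing Implicit Defensive.
Import Order.TTheory GRing.Theory Num.Theory.
Local Open Scope ring_scope.
Definition dlt (P : nat -> int) := fun j => P j.+1 - P j.
Fixpoint deg_lt (d : nat) (P : nat -> int) : Prop :=
  match d with 0 => forall j, P j = 0 | d'.+1 => deg_lt d' (dlt P) end.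

Lemma deg_lt_ext d P Q : (forall j, P j = Q j) -> deg_lt d P -> deg_lt d Q.
Proof.
elim: d P Q => [|d IH] P Q E /=; first by move=> H j; rewrite -E.
apply: IH => j; by rewrite /dlt !E.
Qed.

Lemma deg_lt0 d P : (forall j, P j = 0) -> deg_lt d P.
Proof.
elim: d P => [|d IH] P E //=; apply: IH => j; by rewrite /dlt !E subr0.
Qed.

Lemma deg_ltS d P : deg_lt d P -> deg_lt d.+1 P.
Proof.
elim: d P => [|d IH] P /=; first by move=> E j; rewrite /dlt !E subr0.
exact: IH.
Qed.

Lemma deg_lt_le d e P : (d <= e)%N -> deg_lt d P -> deg_lt e P.
Proof.
move=> /subnK <-; elim: (e - d)%N => [//|k IH] H; rewrite addSn; exact/deg_ltS/IH.
Qed.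

Lemma deg_ltD d P Q : deg_lt d P -> deg_lt d Q -> deg_lt d (fun j => P j + Q j).
Proof.
elim: d P Q => [|d IH] P Q /=; first by move=> E1 E2 j; rewrite E1 E2 addr0.
move=> H1 H2; apply: deg_lt_ext (IH _ _ H1 H2) => j; rewrite /dlt; ring.
Qed.

Lemma deg_ltM c d P : deg_lt d P -> deg_lt d (fun j => c * P j).
Proof.
elim: d P => [|d IH] P /=; first by move=> E j; rewrite E mulr0.
move=> H; apply: deg_lt_ext (IH _ H) => j; rewrite /dlt; ring.
Qed.

Lemma deg_lt_shift d P : deg_lt d P -> deg_lt d (fun j => P j.+1).
Proof.
elim: d P => [|d IH] P /=; first by move=> E j; rewrite E.
move=> H; exact: (deg_lt_ext (fun j => erefl) (IH _ H)).
Qed.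

Lemma dltM f g j : dlt (fun j => f j * g j) j = dlt f j * g j.+1 + f j * dlt g j.
Proof. rewrite /dlt; ring. Qed.

Lemma deg_lt_mul n d e f g : (d + e = n)%N -> deg_lt d.+1 f -> deg_lt e.+1 g ->
  deg_lt (d + e).+1 (fun j => f j * g j).
Proof.
elim: n d e f g => [|n IH] d e f g.
  move/eqP; rewrite addn_eq0 => /andP[/eqP-> /eqP->] /= Hf Hg j.
  by rewrite dltM Hf Hg mulr0 mul0r addr0.
move=> Hde Hf Hg /=.
apply: (deg_lt_ext (fun j => esym (dltM f g j))).
apply: deg_ltD.
  case: d Hde Hf => [|d] Hde Hf /=.
    by apply: deg_lt0 => j; rewrite Hf mul0r.
  apply: (IH d e) => //; first by move: Hde; rewrite addSn => -[].
  exact: deg_lt_shift.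
case: e Hde Hg => [|e] Hde Hg /=.
  by apply: deg_lt0 => j; rewrite Hg mulr0.
rewrite addnS; apply: (IH d e) => //; by move: Hde; rewrite addnS => -[].
Qed.

Lemma deg_lt_bin b : deg_lt b.+1 (fun j => ('C(j, b))%:Z).
Proof.
elim: b => [|b IH] /=.
  by move=> j; rewrite /dlt !bin0 subrr.
apply: deg_lt_ext IH => j; rewrite /dlt binS PoszD; ring.
Qed.

Definition S (n : nat) (P : nat -> int) : int :=
  \sum_(j < n.+1) (-1) ^+ j * ('C(n, j))%:Z * P j.

Lemma S_aux n (P : nat -> int) : \sum_(j < n.+1) (-1) ^+ j * ('C(n, j))%:Z * P j =
  P 0%N - \sum_(i < n.+1) (-1) ^+ i * ('C(n, i.+1))%:Z * P i.+1.
Proof.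
rewrite big_ord_recl [in RHS]big_ord_recr /= (bin_small (ltnSn n)) bin0 expr0.
rewrite opprD mulr0 mul0r subr0 ?mul1r ?mulr1; congr (_ + _).
rewrite -sumrN; apply: eq_bigr => i _.
by rewrite /bump /= exprS; ring.
Qed.

Lemma S_step n P : S n.+1 P = - S n (dlt P).
Proof.
rewrite /S big_ord_recl /= bin0 expr0 !mul1r.
have -> : \sum_(i < n.+1) (-1) ^+ bump 0 i * ('C(n.+1, bump 0 i))%:Z * P (bump 0 i)
  = - \sum_(i < n.+1) (-1) ^+ i * ('C(n, i))%:Z * P i.+1
    - \sum_(i < n.+1) (-1) ^+ i * ('C(n, i.+1))%:Z * P i.+1.
  rewrite -!sumrN -big_split /=; apply: eq_bigr => i _.
  by rewrite /bump /= binS PoszD exprS; ring.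
have -> : \sum_(i < n.+1) (-1) ^+ i * ('C(n, i))%:Z * dlt P i =
   \sum_(i < n.+1) (-1) ^+ i * ('C(n, i))%:Z * P i.+1 -
   \sum_(i < n.+1) (-1) ^+ i * ('C(n, i))%:Z * P i.
  rewrite -sumrB; apply: eq_bigr => i _; rewrite /dlt; ring.
rewrite S_aux; ring.
Qed.

Lemma S_deg n P : deg_lt n P -> S n P = 0.
Proof.
elim: n P => [|n IH] P /=.
  by move=> E; rewrite /S big_ord1 E mulr0.
by move=> H; rewrite S_step IH // oppr0.
Qed.

Lemma hockey a j m : \sum_(i < m) (if (j <= i)%N then ('C(i,a))%:Z else 0)
   = ('C(m,a.+1))%:Z - ('C(minn j m, a.+1))%:Z.
Proof.
elim: m => [|m IH]; first by rewrite big_ord0 minn0 subrr.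
rewrite big_ord_recr /= IH.
case: (leqP j m) => H.
  have -> : minn j m.+1 = j by apply/minn_idPl; rewrite ltnW.
  rewrite binS PoszD; ring.
have -> : minn j m.+1 = m.+1 by apply/minn_idPr.
ring.
Qed.

Lemma g_formula m a j : (j <= m)%N ->
  \sum_(i < m.+2) xi_coef m i j * ('C(i,a))%:Z =
  (-1)^+j * ('C(m.+1,j))%:Z * (('C(m,a.+1))%:Z - ('C(j,a.+1))%:Z).
Proof.
move=> hj.
have -> : \sum_(i < m.+2) xi_coef m i j * ('C(i,a))%:Z =
   \sum_(i < m) (-1)^+j * ('C(m.+1,j))%:Z * (if (j <= i)%N then ('C(i,a))%:Z else 0).
  rewrite !big_ord_recr /= /xi_coef.
  have -> : (j == m.+1) = false by apply/negbTE; rewrite neq_ltn ltnS hj.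
  rewrite !andbF /= ltnn ltnNge leqnSn !andbF !mul0r !addr0.
  apply: eq_bigr => i _; rewrite ltn_ord andbT andbF; case: (j <= i)%N; rewrite ?mul0r ?mulr0 // mulrA.
rewrite -big_distrr /= hockey; congr (_ * (_ - _)); congr (Posz 'C(_,_)).
by apply/minn_idPl.
Qed.

Lemma g_last m a :
  \sum_(i < m.+2) xi_coef m i m.+1 * ('C(i,a))%:Z = (-1)^+m * ('C(m,a))%:Z.
Proof.
rewrite !big_ord_recr /= /xi_coef big1 => [|i _].
  rewrite !eqxx (gtn_eqF (ltnSn m)) /= (_ : (m < m.+1 < m)%N = false); last by lia.
  by rewrite mul0r addr0 add0r.
rewrite eqxx andbT (_ : (i == m :> nat) = false) /=; last by apply/negbTE; rewrite neq_ltn ltn_ord.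
by rewrite (_ : (m < i)%N = false) ?mul0r //; have := ltn_ord i; lia.
Qed.

Definition Q m a b (j : nat) : int := ('C(j,b))%:Z * (('C(m,a.+1))%:Z - ('C(j,a.+1))%:Z).

Lemma taylor_formula m a b : taylor_t0 (xi_coef m) m.+2 a b =
  (-1)^+m * ('C(m,a))%:Z * ('C(m.+1,b))%:Z +
  \sum_(j < m.+1) (-1)^+j * ('C(m.+1,j))%:Z * Q m a b j.
Proof.
rewrite /taylor_t0 exchange_big /=.
have E : forall j : 'I_m.+2, \sum_(i < m.+2) xi_coef m i j * ('C(i, a) * 'C(j, b))%:Z
   = (\sum_(i < m.+2) xi_coef m i j * ('C(i, a))%:Z) * ('C(j,b))%:Z.
  by move=> j; rewrite mulr_suml; apply: eq_bigr => i _; rewrite PoszM mulrA.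
rewrite (eq_bigr _ (fun j _ => E j)) big_ord_recr /= g_last addrC; congr (_ + _).
apply: eq_bigr => j _; rewrite g_formula /Q /=; last by rewrite -ltnS.
ring.
Qed.

Lemma mult_xi m : mult_t0 (xi_coef m) m.+2 m.
Proof.
split.
  move=> a b hab; rewrite taylor_formula.
  have hQ : deg_lt m.+1 (Q m a b).
    apply: (@deg_lt_le (b + a.+1).+1); first by rewrite ltnS addnS; lia.
    apply: (deg_lt_mul (n := (b + a.+1)%N)) => //; first exact: deg_lt_bin.
    have h1 : deg_lt a.+2 (fun j => ('C(m, a.+1))%:Z).
      apply: (@deg_lt_le 1) => //; move=> j /=; rewrite /dlt subrr //.
    have h2 := deg_ltD h1 (deg_ltM (-1) (deg_lt_bin a.+1)).
    apply: deg_lt_ext h2 => j /=; ring.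
  have := S_deg hQ; rewrite /S big_ord_recr /= => /eqP; rewrite addr_eq0 => /eqP ->.
  rewrite /Q binn mulr1 exprS binS PoszD; ring.
exists 0%N, m; split => //; rewrite taylor_formula big1 => [|j _].
  rewrite bin0 binSn addr0 mulr1; apply: mulf_neq0; first by rewrite signr_eq0.
  by [].
rewrite /Q; case: (ltnP j m) => hj; first by rewrite (bin_small hj) mul0r mulr0.
have -> : nat_of_ord j = m by have := ltn_ord j; lia.
by rewrite bin1 subrr !mulr0.
Qed.
Lemma key (n al be : rat) : 2 <= n -> 0 < al -> al < 1 / (1 + n + n ^+ 2) ->
  be < 1 - 1 / (1 + 1 / n + 1 / n ^+ 2 - al / (1 - (n + 1) * al)) ->
  n * (al + be) < 1.
Proof.
move=> hn ha0 ha1 hb1.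
have hq : 0 < 1 + n + n ^+ 2 by nra.
have ha1' : al * (1 + n + n ^+ 2) < 1 by move: ha1; rewrite ltr_pdivlMr // mul1r.
have hp : 0 < 1 - (n + 1) * al.
  have h2 : 0 < al * n ^+ 2 by apply: mulr_gt0 => //; nra.
  nra.
pose A := (n ^+ 2 + n + 1) * (1 - (n + 1) * al) - n ^+ 2 * al.
have hA : 0 < A.
  rewrite /A; nra.
have hn0 : n != 0 by apply/eqP; lra.
have hp0 : 1 - (n + 1) * al != 0 by apply/eqP; lra.
have hA0 : A != 0 by apply/eqP; lra.
have hW : 1 / (1 + 1 / n + 1 / n ^+ 2 - al / (1 - (n + 1) * al))
   = n ^+ 2 * (1 - (n + 1) * al) / A.
  rewrite /A; field.
  by apply/and3P; split.
rewrite hW in hb1.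
have hb2 : be * A < A - n ^+ 2 * (1 - (n + 1) * al).
  have := hb1; rewrite -(ltr_pM2r hA) mulrBl mul1r mulfVK //.
have hf : A * (n - 1 + n * al) <= n ^+ 3 * (1 - (n + 1) * al).
  set K := n * (n ^+ 3 + 3 * n ^+ 2 + 2 * n + 1).
  set B := 2 * n ^+ 2 + 2 * n + 1.
  have hK : 0 < K by rewrite /K; nra.
  have e : n ^+ 3 * (1 - (n + 1) * al) - A * (n - 1 + n * al) =
     ((2 * K * al - B) ^+ 2 + (4 * n ^+ 3 - 1)) / (4 * K).
    rewrite /A /K /B; field; rewrite hn0 andbT; apply/eqP => H; nra.
  rewrite -subr_ge0 e; apply: divr_ge0; last by nra.
  have : 0 <= (2 * K * al - B) ^+ 2 by exact: sqr_ge0.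
  have : 1 <= n ^+ 3 by nra.
  lra.
nra.
Qed.

Unset Implicit Arguments.
Set Strict Implicit.

Theorem lemma5p5 (m : nat) (al be : rat) (hm : (1 <= m)%N)
  (ha0 : 0 < al)
  (ha1 : al < 1 / (1 + m.+1%:R + m.+1%:R ^+ 2))
  (hb0 : 1 / m.+2%:R < be)
  (hb1 : be < 1 - 1 / (1 + 1 / m.+1%:R + 1 / m.+1%:R ^+ 2
                         - al / (1 - m.+2%:R * al))) :
  exists (TC : tri) (mu : nat),
    newton_tri m al be (xi_coef m) TC /\ mult_t0 (xi_coef m) m.+2 mu /\
    let C : bl_class := (TC, mu%:R) in
    let D : bl_class := (H'tri m, m.+1%:R) in
    bl_dot m al be C C < 0 /\ bl_dot m al be C D = 0.
Proof.
have hb1' : be < 1 - 1 / (1 + 1 / m.+1%:R + 1 / m.+1%:R ^+ 2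
                         - al / (1 - (m.+1%:R + 1) * al)) by rewrite natr1.
have hm1 : (1 : rat) <= m%:R by rewrite ler1n.
have hn2 : (2 : rat) <= m.+1%:R by rewrite -natr1; lra.
have hk := key hn2 ha0 ha1 hb1'.
have hbe0 : 0 < be by apply: lt_trans hb0; rewrite divr_gt0 // ltr0n.
move: hk; rewrite -natr1 => hk.
exists (0, - (m.+1%:R * al), m.+1%:R * (m%:R - 1 + be)), m.
split; last split.
- rewrite /newton_tri /l0 /l1 /l2 /=.
  have hx : xi_coef m m m.+1 != 0 by rewrite /xi_coef !eqxx /= signr_eq0.
  split; [|split; [|split]].
  + move=> i j; rewrite /xi_coef.
    case: ifP => [/andP[/eqP -> /eqP ->] _ | _].
      rewrite -!natr1; split; nra.
    case: ifP => [/andP[hji him] _ | _]; last by rewrite eqxx.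
    have h1 : (j%:R : rat) <= i%:R by rewrite ler_nat.
    have h2 : (i%:R : rat) + 1 <= m%:R by rewrite natr1 ler_nat.
    have h3 : (0:rat) <= j%:R by apply: ler0n.
    rewrite -!natr1; split; nra.
  + exists 0%N, 0%N; split => //.
    rewrite /xi_coef /= (_ : (0 == m)%N = false); last by lia.
    by rewrite hm.
  + exists m, m.+1; split => //; rewrite -!natr1; ring.
  + exists m, m.+1; split => //; rewrite -!natr1; ring.
- exact: mult_xi.
- move=> C D; rewrite /C /D /bl_dot /tri_dot /tri_area /tri_vertices /tri_add /H'tri /=.
  rewrite -!natr1.
  have hL : m%:R - 1 + al + be != 0 by apply/eqP; lra.
  have hn0 : m%:R + 1 != 0 :> rat by apply/eqP; lra.
  split; last by field; rewrite hL hn0.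
  set lhs := (X in X < 0).
  have -> : lhs = (m%:R + 1) * (al + be) - 1 by rewrite /lhs; field; rewrite hL hn0.
  lra.
Qed.
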